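(* Consider the optimization problem \[ \max_{\mathsf{V}_1,\dots,\mathsf{V}_K}\ \sum_{k=1}^K \log_2(1+\gamma_k)\quad\text{s.t.}\quad \sum_{k=1}^K\int_{\mathcal{A}}|\mathsf{V}_k(\mathbf{r})|^2\,d\mathbf{r}=P_{\max}, \] where \[ \gamma_k=\frac{|\mathcal{A}_k|\cdot\left|\int_{\mathcal{A}}\mathsf{H}_k(\mathbf{r})\mathsf{V}_k(\mathbf{r})\,d\mathbf{r}\right|^2}{\sum_{j=1,j\neq k}^K|\mathcal{A}_j|\cdot\left|\int_{\mathcal{A}}\mathsf{H}_k(\mathbf{r})\mathsf{V}_j(\mathbf{r})\,d\mathbf{r}\right|^2+\sigma_k^2}. \] Then the optimal beamforming lies in the function subspace spanned by $\mathsf{H}_1^*(\mathbf{r}),\dots,\mathsf{H}_K^*(\mathbf{r})$: for each $k$, the optimal $\mathsf{V}_k$ can be written as $\mathsf{V}_k(\mathbf{r})=\sum_{j=1}^K b_{jk}\mathsf{H}_j^*(\mathbf{r})$ for some complex scalars $b_{jk}$.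
   Context: A base station with a continuous aperture array occupying a region $\mathcal{A}\subseteq\mathbb{R}^3$ serves $K$ users. User $k$ has aperture of area $|\mathcal{A}_k|>0$ centered at $\mathbf{s}_k\in\mathbb{R}^3$, and noise variance $\sigma_k^2>0$; $P_{\max}>0$ is the transmit power budget. The beamforming $\mathsf{V}_k:\mathcal{A}\to\mathbb{C}$ for user $k$ is a square-integrable function. The channel response of user $k$ is \[ \mathsf{H}_k(\mathbf{r})=\sqrt{\frac{\mathbf{e}_r^T(\mathbf{s}_k-\mathbf{r})}{\|\mathbf{r}-\mathbf{s}_k\|}}\cdot\frac{j k_0\eta e^{-jk_0\|\mathbf{r}-\mathbf{s}_k\|}}{4\pi\|\mathbf{r}-\mathbf{s}_k\|}\left(1+\frac{j/k_0}{\|\mathbf{r}-\mathbf{s}_k\|}-\frac{1/k_0^2}{\|\mathbf{r}-\mathbf{s}_k\|^2}\right), \] where $\mathbf{e}_r\in\mathbb{R}^3$ is the normal vector of the base-station aperture, $\eta=120\pi$, $k_0=2\pi/\lambda$ with $\lambda$ the wavelength, and $j$ is the imaginary unit. $(\cdot)^*$ denotes complex conjugation. *)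

(* Defs.v *)
From mathcomp Require Import all_boot all_algebra.
From mathcomp Require Import all_classical all_reals all_analysis.
From mathcomp Require Export complex.
Import GRing.Theory Num.Theory.
Set Implicit Arguments. Unset Strict Implicit. Unset Printing Implicit Defensive.
Local Open Scope ring_scope.

Section CAPA.
Variable R : realType.

Definition vec3 := (R * R * R)%type.
Definition px (p : vec3) : R := p.1.1.
Definition py (p : vec3) : R := p.1.2.
Definition pz (p : vec3) : R := p.2.
Definition sub3 (p q : vec3) : vec3 := (px p - px q, py p - py q, pz p - pz q).
Definition dot3 (p q : vec3) : R := px p * px q + py p * py q + pz p * pz q.
Definition norm3 (p : vec3) : R := Num.sqrt (dot3 p p).

Definition cR (x : R) : R[i] := Complex x 0.
Definition jI : R[i] := Complex 0 1.
Definition sqn (z : R[i]) : R := (complex.Re z) ^+ 2 + (complex.Im z) ^+ 2.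

(* free-space impedance eta = 120 pi and wavenumber k0 = 2 pi / lambda *)
Definition eta0 : R := 120 * pi.
Definition k0 (lambda : R) : R := 2 * pi / lambda.

(* channel response H_k(r) of a user centred at s, aperture normal er *)
Definition chan (lambda : R) (er s r : vec3) : R[i] :=
  let d := norm3 (sub3 r s) in
  let k := k0 lambda in
  cR (Num.sqrt (dot3 er (sub3 s r) / d))
  * ((jI * cR (k * eta0) * Complex (cos (k * d)) (- sin (k * d)))
      / cR (4 * pi * d))
  * (1 + jI / cR (k * d) - cR (1 / (k ^+ 2 * d ^+ 2))).

Variables (dm : measure_display) (T : measurableType dm)
          (mu : {measure set T -> \bar R}) (A : set T).

Definition cint (f : T -> R[i]) : R[i] :=
  Complex (Rintegral mu A (fun x => complex.Re (f x))) (Rintegral mu A (fun x => complex.Im (f x))).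

Definition sq_int (f : T -> R[i]) : Prop :=
  measurable_fun A (fun x => complex.Re (f x)) /\ measurable_fun A (fun x => complex.Im (f x)) /\
  (\int[mu]_(x in A) (sqn (f x))%:E < +oo)%E.

Variables (K : nat) (H : 'I_K -> T -> R[i]) (Ak sigma2 : 'I_K -> R) (Pmax : R).

Definition power (V : 'I_K -> T -> R[i]) : \bar R :=
  (\sum_(k < K) \int[mu]_(x in A) (sqn (V k x))%:E)%E.

Definition sinr (V : 'I_K -> T -> R[i]) (k : 'I_K) : R :=
  Ak k * sqn (cint (fun r => H k r * V k r)) /
  (\sum_(j < K | j != k) Ak j * sqn (cint (fun r => H k r * V j r)) + sigma2 k).

Definition log2 (x : R) : R := ln x / ln 2.

Definition sum_rate (V : 'I_K -> T -> R[i]) : R :=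
  \sum_(k < K) log2 (1 + sinr V k).

Definition feasible (V : 'I_K -> T -> R[i]) : Prop :=
  (forall k, sq_int (V k)) /\ power V = (Pmax%:E)%E.

Definition optimal (V : 'I_K -> T -> R[i]) : Prop :=
  feasible V /\ forall W, feasible W -> sum_rate W <= sum_rate V.

End CAPA.

(* Main.v *)
Require Import Defs.
From mathcomp Require Import all_boot all_algebra.
From mathcomp Require Import all_classical all_reals all_analysis.
From mathcomp Require Import complex.
From mathcomp Require Import order.
From mathcomp Require Import measurable_realfun.
From mathcomp Require Import ring lra.
Import Order.TTheory GRing.Theory Num.Theory.
Import numFieldNormedType.Exports.
Local Open Scope ring_scope.
Local Open Scope classical_set_scope.
Set Implicit Arguments. Unset Strict Implicit. Unset Printing Implicit Defensive.

Notation cRe := complex.Re.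
Notation cIm := complex.Im.
Section CAlg.
Variable R : realType.
Implicit Types z w : R[i].
Lemma ReM z w : cRe (z * w) = cRe z * cRe w - cIm z * cIm w. Proof. by case: z; case: w. Qed.
Lemma ImM z w : cIm (z * w) = cRe z * cIm w + cIm z * cRe w. Proof. by case: z; case: w. Qed.
Lemma ReD z w : cRe (z + w) = cRe z + cRe w. Proof. by case: z; case: w. Qed.
Lemma ImD z w : cIm (z + w) = cIm z + cIm w. Proof. by case: z; case: w. Qed.
Lemma ReN z : cRe (- z) = - cRe z. Proof. by case: z. Qed.
Lemma ImN z : cIm (- z) = - cIm z. Proof. by case: z. Qed.
Lemma ReB z w : cRe (z - w) = cRe z - cRe w. Proof. by case: z; case: w. Qed.
Lemma ImB z w : cIm (z - w) = cIm z - cIm w. Proof. by case: z; case: w. Qed.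
Lemma Reconj z : cRe (z^*) = cRe z. Proof. by case: z. Qed.
Lemma Imconj z : cIm (z^*) = - cIm z. Proof. by case: z. Qed.
Lemma Re0 : cRe (0 : R[i]) = 0. Proof. by []. Qed.
Lemma Im0 : cIm (0 : R[i]) = 0. Proof. by []. Qed.
Lemma sqnM z w : sqn (z * w) = sqn z * sqn w.
Proof. rewrite /sqn ReM ImM; ring. Qed.
Lemma sqn_ge0 z : 0 <= sqn z.
Proof. by rewrite /sqn addr_ge0 // sqr_ge0. Qed.
Lemma sqn_eq0 z : (sqn z == 0) = (z == 0).
Proof.
case: z => a b; rewrite /sqn /=.
apply/idP/idP.
- rewrite paddr_eq0 ?sqr_ge0 // !sqrf_eq0 => /andP[/eqP-> /eqP->] //.
- by move/eqP => [-> ->]; rewrite expr0n /= addr0.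
Qed.
Lemma Re_sum I (r : seq I) (P : pred I) (F : I -> R[i]) :
  cRe (\sum_(i <- r | P i) F i) = \sum_(i <- r | P i) cRe (F i).
Proof. by apply: (big_ind2 (fun x y => cRe x = y)) => // x1 _ x2 _ <- <-; rewrite ReD. Qed.
Lemma Im_sum I (r : seq I) (P : pred I) (F : I -> R[i]) :
  cIm (\sum_(i <- r | P i) F i) = \sum_(i <- r | P i) cIm (F i).
Proof. by apply: (big_ind2 (fun x y => cIm x = y)) => // x1 _ x2 _ <- <-; rewrite ImD. Qed.
Lemma sqn_conj z : sqn (z^*) = sqn z.
Proof. by rewrite /sqn Reconj Imconj sqrrN. Qed.
Lemma sqn_cR (c : R) z : sqn (cR c * z) = c ^+ 2 * sqn z.
Proof. by rewrite sqnM /sqn /= expr0n /= addr0. Qed.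
Lemma mul_conj z : z * z^* = cR (sqn z).
Proof. case: z => a b; rewrite /cR /sqn /=; congr Complex; ring. Qed.
Lemma mulCE z (p q : R) : z * Complex p q = Complex (cRe z * p - cIm z * q) (cRe z * q + cIm z * p).
Proof. by case: z. Qed.
Lemma addCE (p q r s : R) : Complex p q + Complex r s = Complex (p + r) (q + s) :> R[i].
Proof. by []. Qed.
Lemma conjM z w : (z * w)^* = z^* * w^*.
Proof. case: z => a b; case: w => c d; rewrite /conjc /=; congr Complex; ring. Qed.
Lemma conjD z w : (z + w)^* = z^* + w^*.
Proof. case: z => a b; case: w => c d; rewrite /conjc /=; congr Complex; ring. Qed.
Lemma conj_sum I (r : seq I) (P : pred I) (F : I -> R[i]) :
  (\sum_(i <- r | P i) F i)^* = \sum_(i <- r | P i) (F i)^*.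
Proof.
apply: (big_ind2 (fun x y => x^* = y)) => //; first by apply/eqP; rewrite eq_complex /= oppr0 !eqxx.
by move=> x1 _ x2 _ <- <-; rewrite conjD.
Qed.
Lemma cR_inj (a b : R) : cR a = cR b -> a = b.
Proof. by case. Qed.
End CAlg.

Section L2.
Variables (R : realType) (dm : measure_display) (T : measurableType dm)
  (mu : {measure set T -> \bar R}) (A : set T).
Hypothesis mA : measurable A.

Definition cmeas (f : T -> R[i]) :=
  measurable_fun A (fun x => cRe (f x)) /\ measurable_fun A (fun x => cIm (f x)).
Definition cintegrable (f : T -> R[i]) :=
  mu.-integrable A (EFin \o (fun x => cRe (f x))) /\
  mu.-integrable A (EFin \o (fun x => cIm (f x))).

Lemma cmeasD f g : cmeas f -> cmeas g -> cmeas (fun x => f x + g x).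
Proof.
move=> [f1 f2] [g1 g2]; split.
- have -> : (fun x => cRe (f x + g x)) = (fun x => cRe (f x) + cRe (g x)).
    by apply/funext => x; rewrite ReD.
  exact: measurable_funD.
- have -> : (fun x => cIm (f x + g x)) = (fun x => cIm (f x) + cIm (g x)).
    by apply/funext => x; rewrite ImD.
  exact: measurable_funD.
Qed.

Lemma cmeasM f g : cmeas f -> cmeas g -> cmeas (fun x => f x * g x).
Proof.
move=> [f1 f2] [g1 g2]; split.
- have -> : (fun x => cRe (f x * g x)) =
     (fun x => cRe (f x) * cRe (g x) - cIm (f x) * cIm (g x)).
    by apply/funext => x; rewrite ReM.
  by apply: measurable_funB; apply: measurable_funM.
- have -> : (fun x => cIm (f x * g x)) =
     (fun x => cRe (f x) * cIm (g x) + cIm (f x) * cRe (g x)).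
    by apply/funext => x; rewrite ImM.
  by apply: measurable_funD; apply: measurable_funM.
Qed.

Lemma cmeas_cst (c : R[i]) : cmeas (fun _ => c).
Proof. by split; apply: measurable_cst. Qed.

Lemma cmeas_conj f : cmeas f -> cmeas (fun x => (f x)^*).
Proof.
move=> [f1 f2]; split.
- have -> : (fun x => cRe ((f x)^*)) = (fun x => cRe (f x)).
    by apply/funext => x; rewrite Reconj.
  by [].
- have -> : (fun x => cIm ((f x)^*)) = (fun x => - cIm (f x)).
    by apply/funext => x; rewrite Imconj.
  exact: measurable_funN.
Qed.

Lemma cmeas_sum (I : Type) (r : seq I) (P : pred I) (F : I -> T -> R[i]) :
  (forall j, cmeas (F j)) -> cmeas (fun x => \sum_(j <- r | P j) F j x).
Proof.
move=> HF; elim: r => [|j r IH].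
  have -> : (fun x => \sum_(j <- [::] | P j) F j x) = (fun _ => 0).
    by apply/funext => x; rewrite big_nil.
  exact: cmeas_cst.
case Pj: (P j).
  have -> : (fun x => \sum_(i <- j :: r | P i) F i x) =
            (fun x => F j x + \sum_(i <- r | P i) F i x).
    by apply/funext => x; rewrite big_cons Pj.
  exact: cmeasD.
have -> : (fun x => \sum_(i <- j :: r | P i) F i x) =
          (fun x => \sum_(i <- r | P i) F i x).
  by apply/funext => x; rewrite big_cons Pj.
exact: IH.
Qed.

Lemma cmeas_sqn f : cmeas f -> measurable_fun A (fun x => sqn (f x)).
Proof.
move=> [f1 f2]; rewrite /sqn.
by apply: measurable_funD; apply: measurable_funX.
Qed.

Lemma sq_int_cmeas f : sq_int mu A f -> cmeas f.
Proof. by case=> [? [? _]]. Qed.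

Lemma sq_intP f : sq_int mu A f <->
  cmeas f /\ mu.-integrable A (EFin \o (fun x => sqn (f x))).
Proof.
split.
- move=> [f1 [f2 fin]]; split => //; apply/integrableP; split.
    by apply/measurable_EFinP; apply: cmeas_sqn.
  rewrite (eq_integral (fun x => (sqn (f x))%:E)) //.
  by move=> x _ /=; rewrite ger0_norm // sqn_ge0.
- move=> [[f1 f2] /integrableP [_ fin]]; split => //; split => //.
  rewrite (eq_integral (fun x => `|(EFin \o (fun x => sqn (f x))) x|)%E) //.
  by move=> x _ /=; rewrite ger0_norm // sqn_ge0.
Qed.

Definition nrm f := Rintegral mu A (fun x => sqn (f x)).

Lemma nrm_ge0 f : 0 <= nrm f.
Proof. by apply: Rintegral_ge0 => x _; apply: sqn_ge0. Qed.

Lemma nrmE f : sq_int mu A f ->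
  (\int[mu]_(x in A) (sqn (f x))%:E)%E = (nrm f)%:E.
Proof.
move=> [_ [_ fin]]; rewrite /nrm /Rintegral fineK // ge0_fin_numE //.
by apply: integral_ge0 => x _; rewrite lee_fin sqn_ge0.
Qed.

Lemma sq_int_dom f g (c : R) : cmeas f -> sq_int mu A g ->
  (forall x, A x -> sqn (f x) <= c * sqn (g x)) -> sq_int mu A f.
Proof.
move=> mf /sq_intP [mg ig] hle; apply/sq_intP; split => //.
apply: (le_integrable mA _ _ (integrableZl mA c ig)).
  by apply/measurable_EFinP; apply: cmeas_sqn.
move=> x Ax /=; rewrite ?abse_EFin lee_fin.
rewrite ger0_norm ?sqn_ge0 //; apply: (le_trans (hle x Ax)).
exact: ler_norm.
Qed.

Lemma sq_intD f g : sq_int mu A f -> sq_int mu A g ->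
  sq_int mu A (fun x => f x + g x).
Proof.
move=> sf sg; have /sq_intP [mf If] := sf; have /sq_intP [mg Ig] := sg.
apply/sq_intP; split; first exact: cmeasD.
have Is := integrableD mA If Ig.
apply: (le_integrable mA _ _ (integrableZl mA 2 Is)).
  by apply/measurable_EFinP; apply: cmeas_sqn; apply: cmeasD.
move=> x Ax /=; rewrite -?EFinD -?EFinM ?abse_EFin lee_fin.
rewrite ger0_norm ?sqn_ge0 // ger0_norm; last by rewrite mulr_ge0 // addr_ge0 // sqn_ge0.
rewrite /sqn ReD ImD.
set a := cRe (f x); set b := cIm (f x); set c := cRe (g x); set e := cIm (g x).
have := sqr_ge0 (a - c); have := sqr_ge0 (b - e); nra.
Qed.

Lemma sq_intMc f (c : R[i]) : sq_int mu A f -> sq_int mu A (fun x => c * f x).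
Proof.
move=> sf; apply: (@sq_int_dom _ f (sqn c)) => //.
  by apply: cmeasM; [apply: cmeas_cst | apply: sq_int_cmeas].
by move=> x _; rewrite sqnM.
Qed.

Lemma sq_int_conj f : sq_int mu A f -> sq_int mu A (fun x => (f x)^*).
Proof.
move=> sf; apply: (@sq_int_dom _ f 1) => //.
  by apply: cmeas_conj; apply: sq_int_cmeas.
by move=> x _; rewrite sqn_conj mul1r.
Qed.

Lemma sq_int0 : sq_int mu A (fun _ => 0).
Proof.
split; first exact: measurable_cst.
split; first exact: measurable_cst.
rewrite (eq_integral (fun _ => 0%E)); first by rewrite integral0.
by move=> x _; rewrite /sqn /= expr0n /= addr0.
Qed.

Lemma sq_int_sum (I : Type) (r : seq I) (P : pred I) (F : I -> T -> R[i]) :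
  (forall j, sq_int mu A (F j)) -> sq_int mu A (fun x => \sum_(j <- r | P j) F j x).
Proof.
move=> HF; elim: r => [|j r IH].
  have -> : (fun x => \sum_(j <- [::] | P j) F j x) = (fun _ => 0).
    by apply/funext => x; rewrite big_nil.
  exact: sq_int0.
case Pj: (P j).
  have -> : (fun x => \sum_(i <- j :: r | P i) F i x) =
            (fun x => F j x + \sum_(i <- r | P i) F i x).
    by apply/funext => x; rewrite big_cons Pj.
  exact: sq_intD.
have -> : (fun x => \sum_(i <- j :: r | P i) F i x) =
          (fun x => \sum_(i <- r | P i) F i x).
  by apply/funext => x; rewrite big_cons Pj.
exact: IH.
Qed.

End L2.

Section Cint.
Variables (R : realType) (dm : measure_display) (T : measurableType dm)
  (mu : {measure set T -> \bar R}) (A : set T).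
Hypothesis mA : measurable A.
Local Notation cintegrable := (cintegrable mu A).
Local Notation cint := (cint mu A).
Local Notation sq_int := (sq_int mu A).
Local Notation Rint := (Rintegral mu A).

Lemma int_scale (u : T -> R) (a : R) : mu.-integrable A (EFin \o u) ->
  mu.-integrable A (EFin \o (fun x => a * u x)).
Proof.
move=> Iu; apply: (eq_integrable mA _ _ _ (integrableZl mA a Iu)).
by move=> x _ /=; rewrite EFinM.
Qed.

Lemma int_add (u v : T -> R) : mu.-integrable A (EFin \o u) ->
  mu.-integrable A (EFin \o v) -> mu.-integrable A (EFin \o (fun x => u x + v x)).
Proof.
move=> Iu Iv; apply: (eq_integrable mA _ _ _ (integrableD mA Iu Iv)).
by move=> x _ /=; rewrite EFinD.
Qed.

Lemma int_lin (u v : T -> R) (a b : R) : mu.-integrable A (EFin \o u) ->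
  mu.-integrable A (EFin \o v) ->
  mu.-integrable A (EFin \o (fun x => a * u x + b * v x)).
Proof. by move=> Iu Iv; apply: int_add; apply: int_scale. Qed.

Lemma Rint_lin (u v : T -> R) (a b : R) : mu.-integrable A (EFin \o u) ->
  mu.-integrable A (EFin \o v) ->
  Rint (fun x => a * u x + b * v x) = a * Rint u + b * Rint v.
Proof.
move=> Iu Iv; rewrite RintegralD //; try by apply: int_scale.
by rewrite !RintegralZl.
Qed.

Lemma Rint_ext (u v : T -> R) : (forall x, A x -> u x = v x) -> Rint u = Rint v.
Proof. by move=> h; apply: eq_Rintegral => x /set_mem Ax; apply: h. Qed.

Lemma Rint0 : Rint (fun _ => 0) = 0.
Proof. by rewrite Rintegral_cst // mul0r. Qed.

Lemma int0 : mu.-integrable A (EFin \o (fun _ : T => (0 : R))).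
Proof. exact: integrable0. Qed.

Lemma cint_ext f g : (forall x, A x -> f x = g x) -> cint f = cint g.
Proof.
move=> h; rewrite /Defs.cint; congr Complex; apply: Rint_ext => x Ax; by rewrite h.
Qed.

Lemma cintegrable_ext f g : (forall x, A x -> f x = g x) -> cintegrable f -> cintegrable g.
Proof.
move=> h [I1 I2]; split.
- by apply: (eq_integrable mA _ _ _ I1) => x /set_mem Ax /=; rewrite h.
- by apply: (eq_integrable mA _ _ _ I2) => x /set_mem Ax /=; rewrite h.
Qed.

Lemma cintegrable_lin f g (a b : R[i]) : cintegrable f -> cintegrable g ->
  cintegrable (fun x => a * f x + b * g x).
Proof.
move=> [f1 f2] [g1 g2]; split.
- have I1 := int_lin (cRe a) (- cIm a) f1 f2.
  have I2 := int_lin (cRe b) (- cIm b) g1 g2.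
  apply: (eq_integrable mA _ _ _ (int_add I1 I2)) => x _ /=.
  by rewrite ReD !ReM; congr EFin; ring.
- have I1 := int_lin (cRe a) (cIm a) f2 f1.
  have I2 := int_lin (cRe b) (cIm b) g2 g1.
  apply: (eq_integrable mA _ _ _ (int_add I1 I2)) => x _ /=.
  by rewrite ImD !ImM; congr EFin; ring.
Qed.

Lemma cint_lin f g (a b : R[i]) : cintegrable f -> cintegrable g ->
  cint (fun x => a * f x + b * g x) = a * cint f + b * cint g.
Proof.
move=> [f1 f2] [g1 g2]; rewrite /Defs.cint.
have I1 := int_lin (cRe a) (- cIm a) f1 f2.
have I2 := int_lin (cRe b) (- cIm b) g1 g2.
have J1 := int_lin (cRe a) (cIm a) f2 f1.
have J2 := int_lin (cRe b) (cIm b) g2 g1.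
rewrite (@Rint_ext _ (fun x => 1 * (cRe a * cRe (f x) + - cIm a * cIm (f x))
   + 1 * (cRe b * cRe (g x) + - cIm b * cIm (g x)))); last first.
  by move=> x _; rewrite ReD !ReM; ring.
rewrite (@Rint_ext (fun x => cIm (a * f x + b * g x))
   (fun x => 1 * (cRe a * cIm (f x) + cIm a * cRe (f x))
   + 1 * (cRe b * cIm (g x) + cIm b * cRe (g x)))); last first.
  by move=> x _; rewrite ImD !ImM; ring.
rewrite !Rint_lin //.
by rewrite !mulCE addCE; congr Complex; ring.
Qed.


Lemma cintegrable0 : cintegrable (fun _ => 0).
Proof. by split; apply: int0. Qed.

Lemma cint0 : cint (fun _ => 0) = 0.
Proof. by rewrite /Defs.cint Rint0. Qed.

Lemma cint_sum_int (I : Type) (r : seq I) (a : I -> R[i]) (F : I -> T -> R[i]) :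
  (forall i, cintegrable (F i)) ->
  cintegrable (fun x => \sum_(i <- r) a i * F i x).
Proof.
move=> HF; elim: r => [|j r IH1].
  by apply: (cintegrable_ext (f := fun _ => 0)) => [x _|]; rewrite ?big_nil //; apply: cintegrable0.
have E : forall x, A x -> a j * F j x + 1 * (\sum_(i <- r) a i * F i x) =
   \sum_(i <- j :: r) a i * F i x by move=> x _; rewrite big_cons mul1r.
exact: (cintegrable_ext E (cintegrable_lin _ _ (HF j) IH1)).
Qed.

Lemma cint_sum (I : Type) (r : seq I) (a : I -> R[i]) (F : I -> T -> R[i]) :
  (forall i, cintegrable (F i)) ->
  cint (fun x => \sum_(i <- r) a i * F i x) = \sum_(i <- r) a i * cint (F i).
Proof.
move=> HF; elim: r => [|j r IH2].
  rewrite [RHS]big_nil; transitivity (cint (fun _ => 0)); last exact: cint0.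
  by apply: cint_ext => x _; rewrite big_nil.
have E : forall x, A x -> a j * F j x + 1 * (\sum_(i <- r) a i * F i x) =
   \sum_(i <- j :: r) a i * F i x by move=> x _; rewrite big_cons mul1r.
rewrite -(cint_ext E) cint_lin ?IH2 ?big_cons ?mul1r //.
exact: cint_sum_int.
Qed.


Lemma cint_conj f : cintegrable f -> cint (fun x => (f x)^*) = (cint f)^*.
Proof.
move=> [f1 f2]; rewrite /Defs.cint /conjc; congr Complex.
  by apply: Rint_ext => x _; rewrite Reconj.
rewrite (@Rint_ext _ (fun x => -1 * cIm (f x))); last by move=> x _; rewrite Imconj mulN1r.
by rewrite RintegralZl // mulN1r.
Qed.

Lemma cintegrable_conj f : cintegrable f -> cintegrable (fun x => (f x)^*).
Proof.
move=> [f1 f2]; split.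
  by apply: (eq_integrable mA _ _ _ f1) => x _ /=; rewrite Reconj.
apply: (eq_integrable mA _ _ _ (int_scale (-1) f2)) => x _ /=.
by rewrite Imconj mulN1r.
Qed.

Lemma int_sqn2 f g : sq_int f -> sq_int g ->
  mu.-integrable A (EFin \o (fun x => sqn (f x) + sqn (g x))).
Proof.
by move=> /sq_intP [_ If] /sq_intP [_ Ig]; apply: int_add.
Qed.

Lemma prod_cintegrable f g : sq_int f -> sq_int g -> cintegrable (fun x => f x * g x).
Proof.
move=> sf sg; have mfg := cmeasM (sq_int_cmeas sf) (sq_int_cmeas sg).
have I := int_sqn2 sf sg.
case: mfg => m1 m2; split.
- apply: (le_integrable mA _ _ I); first by apply/measurable_EFinP.
  move=> x _ /=; rewrite lee_fin (ger0_norm (addr_ge0 (sqn_ge0 _) (sqn_ge0 _))).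
  rewrite ReM /sqn; set a := cRe (f x); set b := cIm (f x); set c := cRe (g x); set e := cIm (g x).
  rewrite ler_norml; apply/andP; split.
    have := sqr_ge0 (a + c); have := sqr_ge0 (b - e); nra.
  have := sqr_ge0 (a - c); have := sqr_ge0 (b + e); nra.
- apply: (le_integrable mA _ _ I); first by apply/measurable_EFinP.
  move=> x _ /=; rewrite lee_fin (ger0_norm (addr_ge0 (sqn_ge0 _) (sqn_ge0 _))).
  rewrite ImM /sqn; set a := cRe (f x); set b := cIm (f x); set c := cRe (g x); set e := cIm (g x).
  rewrite ler_norml; apply/andP; split.
    have := sqr_ge0 (a + e); have := sqr_ge0 (b + c); nra.
  have := sqr_ge0 (a - e); have := sqr_ge0 (b - c); nra.
Qed.

Lemma cint_cR (u : T -> R) : cint (fun x => cR (u x)) = cR (Rint u).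
Proof. by rewrite /Defs.cint /cR /=; congr Complex; rewrite Rint0. Qed.

Lemma cint_nrm f : cint (fun x => f x * (f x)^*) = cR (nrm mu A f).
Proof.
by rewrite (cint_ext (g := fun x => cR (sqn (f x)))) ?cint_cR // => x _; rewrite mul_conj.
Qed.

Lemma nrm0_ae f : sq_int f -> nrm mu A f = 0 -> {ae mu, forall x, A x -> f x = 0}.
Proof.
move=> sf n0.
have := nrmE sf; rewrite n0 => I0.
have H : ae_eq mu A (EFin \o (fun x => sqn (f x))) (cst 0%E).
  apply/(ae_eq_integral_abs mu mA).
    by apply/measurable_EFinP; apply: cmeas_sqn; apply: sq_int_cmeas sf.
  apply: (eq_trans _ I0); apply: eq_integral => x _ /=.
  by rewrite ger0_norm // sqn_ge0.
apply: filterS H => x H Ax.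
have := H Ax => /= /eqP; rewrite eqe sqn_eq0 => /eqP //.
Qed.

Lemma Rint_ae0 (u : T -> R) : measurable_fun A u ->
  {ae mu, forall x, A x -> u x = 0} -> Rint u = 0.
Proof.
move=> mu0 H; rewrite /Rintegral.
have -> : (\int[mu]_(x in A) (u x)%:E)%E = (\int[mu]_(x in A) (cst 0%E) x)%E.
  apply: ae_eq_integral => //.
  - exact/measurable_EFinP.
  - by apply: filterS H => x H0 Ax; rewrite /= H0.
by rewrite integral0.
Qed.

Lemma cint_ae0 g : cmeas A g -> {ae mu, forall x, A x -> g x = 0} -> cint g = 0.
Proof.
move=> [m1 m2] H; rewrite /Defs.cint !Rint_ae0 //.
- by apply: filterS H => x H0 Ax; rewrite H0.
- by apply: filterS H => x H0 Ax; rewrite H0.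
Qed.


End Cint.

Section Proj.
Variables (R : realType) (dm : measure_display) (T : measurableType dm)
  (mu : {measure set T -> \bar R}) (A : set T).
Hypothesis mA : measurable A.
Local Notation cintegrable := (cintegrable mu A).
Local Notation cint := (cint mu A).
Local Notation sq_int := (sq_int mu A).
Variables (n : nat) (h : 'I_n -> T -> R[i]) (v : T -> R[i]).
Hypotheses (Hh : forall i, sq_int (h i)) (Hv : sq_int v).

Definition gramM : 'M[R[i]]_n := \matrix_(j, i) cint (fun t => h i t * (h j t)^*).
Definition rhsc : 'rV[R[i]]_n := \row_i cint (fun t => h i t * v t).

Lemma gram_key (x : 'cV[R[i]]_n) : gramM *m x = 0 -> rhsc *m x = 0.
Proof.
move=> Hx.
pose g := fun t => \sum_(i < n) x i 0 * h i t.
have sg : sq_int g.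
  by apply: (sq_int_sum mA) => i; apply: (sq_intMc mA).
have Hj : forall j, cint (fun t => g t * (h j t)^*) = 0.
  move=> j; have := congr1 (fun X : 'M[R[i]]_(n, 1) => X j 0) Hx; rewrite !mxE => <-.
  under [RHS]eq_bigr do rewrite mxE mulrC.
  rewrite -(@cint_sum _ _ _ _ _ mA _ _ (fun i => x i 0) (fun i t => h i t * (h j t)^*)).
  - apply: cint_ext => t _; rewrite /g mulr_suml; apply: eq_bigr => i _.
    by rewrite mulrA.
  - by move=> i; apply: (prod_cintegrable mA) => //; apply: (sq_int_conj mA).
have Hg : nrm mu A g = 0.
  apply: cR_inj; rewrite -(cint_nrm mu mA g).
  transitivity (cint (fun t => \sum_(j < n) (x j 0)^* * (g t * (h j t)^*))).
    apply: cint_ext => t _; rewrite {2}/g conj_sum mulr_sumr; apply: eq_bigr => j _.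
    by rewrite conjM mulrCA.
  rewrite (@cint_sum _ _ _ _ _ mA _ _ (fun j => (x j 0)^*) (fun j t => g t * (h j t)^*)).
    by rewrite big1 // => j _; rewrite Hj mulr0.
  by move=> j; apply: (prod_cintegrable mA) => //; apply: (sq_int_conj mA).
have ae := nrm0_ae mA sg Hg.
have Hgv : cint (fun t => g t * v t) = 0.
  apply: (cint_ae0 mA); first by apply: cmeasM; [exact: (sq_int_cmeas sg) | exact: (sq_int_cmeas Hv)].
  by apply: filterS ae => t H At; rewrite (H At) mul0r.
apply/matrixP => a b; rewrite !ord1 !mxE.
under eq_bigr do rewrite mxE mulrC.
rewrite -(@cint_sum _ _ _ _ _ mA _ _ (fun i => x i 0) (fun i t => h i t * v t)).
  rewrite -[RHS]Hgv; apply: cint_ext => t _; rewrite /g mulr_suml; apply: eq_bigr => i _.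
  by rewrite mulrA.
by move=> i; apply: (prod_cintegrable mA).
Qed.

Lemma exists_proj : exists b : 'I_n -> R[i],
  forall i, cint (fun t => h i t * (v t - \sum_(j < n) b j * (h j t)^*)) = 0.
Proof.
have sub : (rhsc <= gramM)%MS.
  rewrite submxE; apply/eqP/matrixP => a j.
  set K := cokermx gramM.
  have Hc : gramM *m col j K = 0.
    by rewrite colE mulmxA -colE mulmx_coker; apply/matrixP => p q; rewrite !mxE.
  have := congr1 (fun X : 'M[R[i]]_(1, 1) => X a 0) (gram_key Hc).
  rewrite !mxE => H; rewrite -[RHS]H.
  by apply: eq_bigr => k _; rewrite ?mxE.
case/submxP: sub => D HD.
exists (fun j => D 0 j) => i.
rewrite (cint_ext mu (g := fun t => 1 * (h i t * v t) + (-1) * (\sum_(j < n) D 0 j * (h i t * (h j t)^*)))); last first.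
  move=> t _; rewrite mul1r mulN1r mulrBr mulr_sumr; congr (_ - _).
  by apply: eq_bigr => j _; rewrite mulrCA.
rewrite (cint_lin mA) //; last 2 first.
- by apply: (prod_cintegrable mA).
- apply: (cint_sum_int mA) => j; apply: (prod_cintegrable mA) => //; exact: (sq_int_conj mA).
rewrite (@cint_sum _ _ _ _ _ mA _ _ (fun j => D 0 j) (fun j t => h i t * (h j t)^*)); last first.
  by move=> j; apply: (prod_cintegrable mA) => //; apply: (sq_int_conj mA).
have := congr1 (fun X : 'M[R[i]]_(1, n) => X 0 i) HD; rewrite !mxE => ->.
rewrite mul1r mulN1r; apply/eqP; rewrite subr_eq0; apply/eqP.
by apply: eq_bigr => j _; rewrite mxE.
Qed.

End Proj.

Section Pyth.
Variables (R : realType) (dm : measure_display) (T : measurableType dm)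
  (mu : {measure set T -> \bar R}) (A : set T).
Hypothesis mA : measurable A.
Local Notation cint := (cint mu A).
Local Notation sq_int := (sq_int mu A).
Local Notation nrm := (nrm mu A).

Lemma pythag p q : sq_int p -> sq_int q -> cint (fun x => p x * (q x)^*) = 0 ->
  nrm (fun x => p x + q x) = nrm p + nrm q.
Proof.
move=> sp sq orth.
have [I1 _] := prod_cintegrable mA sp (sq_int_conj mA sq).
have I2 := int_sqn2 mA sp sq.
rewrite /nrm (@Rint_ext _ _ _ mu A _ (fun x => 1 * (sqn (p x) + sqn (q x)) + 2 * cRe (p x * (q x)^*))); last first.
  move=> x _; rewrite /sqn ReD ImD ReM Reconj Imconj; ring.
rewrite (Rint_lin mA) // mul1r RintegralD //; last 2 first.
- by case/sq_intP: sp.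
- by case/sq_intP: sq.
have -> : Rintegral mu A (fun x => cRe (p x * (q x)^*)) = cRe (cint (fun x => p x * (q x)^*)) by [].
by rewrite orth /= mulr0 addr0.
Qed.

Lemma power_real K (V : 'I_K -> T -> R[i]) : (forall j, sq_int (V j)) ->
  power mu A V = (\sum_(j < K) nrm (V j))%:E.
Proof.
move=> HV; rewrite /power -sumEFin; apply: eq_bigr => j _.
by rewrite nrmE.
Qed.

Lemma nrm_scale (c : R) f : sq_int f -> nrm (fun x => cR c * f x) = c ^+ 2 * nrm f.
Proof.
move=> /sq_intP [_ I]; rewrite /nrm -RintegralZl //.
by apply: (Rint_ext mu) => x _; rewrite sqn_cR.
Qed.

End Pyth.

Section Rate.
Variable R : realType.

Lemma ln2_gt0 : 0 < ln (2 : R).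
Proof. by apply: ln_gt0; rewrite ltr1n. Qed.

Lemma log2_le (x y : R) : 0 <= x -> x <= y -> log2 (1 + x) <= log2 (1 + y).
Proof.
move=> x0 xy; rewrite /log2 ler_pM2r ?invr_gt0 ?ln2_gt0 //.
rewrite ler_ln ?posrE; first by rewrite lerD2l.
- lra.
- lra.
Qed.

Lemma log2_lt (x y : R) : 0 <= x -> x < y -> log2 (1 + x) < log2 (1 + y).
Proof.
move=> x0 xy; rewrite /log2 ltr_pM2r ?invr_gt0 ?ln2_gt0 //.
rewrite ltr_ln ?posrE; first by rewrite ltrD2l.
- lra.
- lra.
Qed.

Lemma log2_1 : log2 (1 + 0 : R) = 0.
Proof. by rewrite addr0 /log2 ln1 mul0r. Qed.

Lemma frac_le (a I s t : R) : 0 <= a -> 0 <= I -> 0 < s -> 1 <= t ->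
  a / (I + s) <= (t * a) / (t * I + s).
Proof.
move=> a0 I0 s0 t1.
have d1 : 0 < I + s by lra.
have d2 : 0 < t * I + s by nra.
rewrite ler_pdivlMr // mulrAC ler_pdivrMr //.
have h : 0 <= a * s * (t - 1).
  by apply: mulr_ge0; [apply: mulr_ge0 => //; exact: ltW | rewrite subr_ge0].
nra.
Qed.

Lemma frac_lt (a I s t : R) : 0 < a -> 0 <= I -> 0 < s -> 1 < t ->
  a / (I + s) < (t * a) / (t * I + s).
Proof.
move=> a0 I0 s0 t1.
have d1 : 0 < I + s by lra.
have d2 : 0 < t * I + s by nra.
rewrite ltr_pdivlMr // mulrAC ltr_pdivrMr //.
have h : 0 < a * s * (t - 1).
  by apply: mulr_gt0; [apply: mulr_gt0 | rewrite subr_gt0].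
nra.
Qed.

End Rate.

Section Main.
Variables (R : realType) (dm : measure_display) (T : measurableType dm)
  (mu : {measure set T -> \bar R}) (A : set T).
Hypothesis mA : measurable A.
Local Notation cint := (cint mu A).
Local Notation sq_int := (sq_int mu A).
Local Notation nrm := (nrm mu A).
Variables (K : nat) (H : 'I_K -> T -> R[i]) (Ak sigma2 : 'I_K -> R) (Pmax : R).
Hypotheses (hAk : forall k, 0 < Ak k) (hs : forall k, 0 < sigma2 k) (hP : 0 < Pmax)
  (HH : forall j, sq_int (H j)) (HHpos : forall j, 0 < nrm (H j)).
Local Notation sinr := (sinr mu A H Ak sigma2).
Local Notation sum_rate := (sum_rate mu A H Ak sigma2).

Lemma sinr_ext V W : (forall i j, cint (fun r => H i r * V j r) = cint (fun r => H i r * W j r)) ->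
  forall k, sinr V k = sinr W k.
Proof.
move=> E k; rewrite /Defs.sinr E; congr (_ / (_ + _)).
by apply: eq_bigr => j _; rewrite E.
Qed.

Lemma sum_rate_ext V W : (forall i j, cint (fun r => H i r * V j r) = cint (fun r => H i r * W j r)) ->
  sum_rate V = sum_rate W.
Proof. by move=> E; rewrite /Defs.sum_rate; apply: eq_bigr => k _; rewrite (sinr_ext E). Qed.

Lemma intf_ge0 V k : 0 <= \sum_(j < K | j != k) Ak j * sqn (cint (fun r => H k r * V j r)).
Proof. by apply: sumr_ge0 => j _; apply: mulr_ge0; [exact: ltW | exact: sqn_ge0]. Qed.

Lemma sinr_ge0 V k : 0 <= sinr V k.
Proof.
rewrite /Defs.sinr; apply: divr_ge0.
  by apply: mulr_ge0; [exact: ltW | exact: sqn_ge0].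
by apply: addr_ge0; [exact: intf_ge0 | exact: ltW].
Qed.

Lemma cint_scale f (c : R) : cintegrable mu A f ->
  cint (fun r => cR c * f r) = cR c * cint f.
Proof.
move=> If.
rewrite (cint_ext mu (g := fun r => cR c * f r + 0 * f r)); last by move=> r _; rewrite mul0r addr0.
by rewrite (cint_lin mA) // mul0r addr0.
Qed.

Lemma sinr_scale U (c : R) : (forall j, sq_int (U j)) -> forall k,
  sinr (fun j r => cR c * U j r) k =
  (c ^+ 2 * (Ak k * sqn (cint (fun r => H k r * U k r)))) /
  (c ^+ 2 * (\sum_(j < K | j != k) Ak j * sqn (cint (fun r => H k r * U j r))) + sigma2 k).
Proof.
move=> HU k.
have E : forall i j, cint (fun r => H i r * (cR c * U j r)) = cR c * cint (fun r => H i r * U j r).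
  move=> i j; rewrite -cint_scale; last exact: (prod_cintegrable mA).
  by apply: cint_ext => r _; rewrite mulrCA.
rewrite /Defs.sinr E sqn_cR mulrCA; congr (_ / (_ + _)).
rewrite mulr_sumr; apply: eq_bigr => j _; rewrite E sqn_cR; ring.
Qed.

End Main.

Section Main2.
Variables (R : realType) (dm : measure_display) (T : measurableType dm)
  (mu : {measure set T -> \bar R}) (A : set T).
Hypothesis mA : measurable A.
Local Notation cint := (cint mu A).
Local Notation sq_int := (sq_int mu A).
Local Notation nrm := (nrm mu A).
Variables (K : nat) (H : 'I_K -> T -> R[i]) (Ak sigma2 : 'I_K -> R) (Pmax : R).
Hypotheses (hAk : forall k, 0 < Ak k) (hs : forall k, 0 < sigma2 k) (hP : 0 < Pmax)
  (HH : forall j, sq_int (H j)) (HHpos : forall j, 0 < nrm (H j)).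
Local Notation sinr := (sinr mu A H Ak sigma2).
Local Notation sum_rate := (sum_rate mu A H Ak sigma2).

Lemma main_abstract V : optimal mu A H Ak sigma2 Pmax V ->
  forall k, exists b : 'I_K -> R[i],
    {ae mu, forall r, A r -> V k r = \sum_(j < K) b j * (H j r)^*}.
Proof.
move=> [[HV pV] opt] k.
have [b Hb] := exists_proj mA HH (HV k).
exists b.
pose p := fun r => \sum_(j < K) b j * (H j r)^*.
pose q := fun r => V k r - p r.
have sp : sq_int p.
  by apply: (sq_int_sum mA) => j; apply: (sq_intMc mA); apply: (sq_int_conj mA).
have sq : sq_int q.
  have -> : q = (fun r => V k r + (-1) * p r) by apply/funext => r; rewrite mulN1r.
  by apply: (sq_intD mA) => //; apply: (sq_intMc mA).
have [q0|qn0] := eqVneq (nrm q) 0.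
  apply: filterS (nrm0_ae mA sq q0) => r Hr Ar.
  by have /eqP := Hr Ar; rewrite subr_eq0 => /eqP.
exfalso.
have qpos : 0 < nrm q by rewrite lt0r qn0 nrm_ge0.
pose U := fun j => if j == k then p else V j.
have sU : forall j, sq_int (U j) by move=> j; rewrite /U; case: eqP.
have hU : forall i j, cint (fun r => H i r * U j r) = cint (fun r => H i r * V j r).
  move=> i j; rewrite /U; case: eqP => [->|//].
  rewrite (cint_ext mu (f := fun r => H i r * V k r) (g := fun r => 1 * (H i r * p r) + 1 * (H i r * q r))); last first.
    by move=> r _; rewrite !mul1r -mulrDr /q addrC subrK.
  rewrite (cint_lin mA); try exact: (prod_cintegrable mA).
  by rewrite Hb mulr0 addr0 mul1r.
have conj0 : (0 : R[i])^* = 0 by apply/eqP; rewrite eq_complex /= oppr0 !eqxx.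
have pyth : nrm (V k) = nrm p + nrm q.
  have -> : V k = (fun r => p r + q r) by apply/funext => r; rewrite /q addrC subrK.
  apply: (pythag mA sp sq).
  rewrite (cint_ext mu (g := fun r => \sum_(j < K) b j * (H j r * q r)^*)); last first.
    move=> r _; rewrite /p mulr_suml; apply: eq_bigr => j _; by rewrite conjM mulrA.
  rewrite (@cint_sum _ _ _ _ _ mA _ _ b (fun j r => (H j r * q r)^*)); last first.
    by move=> j; apply: (cintegrable_conj mA); apply: (prod_cintegrable mA).
  rewrite big1 // => j _; rewrite (cint_conj mA); last exact: (prod_cintegrable mA).
  by rewrite Hb conj0 mulr0.
have sumV : \sum_(j < K) nrm (V j) = Pmax.
  by move: pV; rewrite (power_real HV) => /eqP; rewrite eqe => /eqP.
have sumU : \sum_(j < K) nrm (U j) = Pmax - nrm q.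
  rewrite -sumV (bigD1 k) //= [in RHS](bigD1 k) //= {1}/U eqxx pyth.
  have -> : \sum_(j < K | j != k) nrm (U j) = \sum_(j < K | j != k) nrm (V j).
    by apply: eq_bigr => j /negbTE jk; rewrite /U jk.
  ring.
have sqn0 : sqn (0 : R[i]) = 0 by rewrite /sqn /= expr0n /= addr0.
case: (pselect (exists k', 0 < sqn (cint (fun r => H k' r * V k' r)))) => [[k' Sk']|noS].
  have PUpos : 0 < \sum_(j < K) nrm (U j).
    have PUge0 : 0 <= \sum_(j < K) nrm (U j) by apply: sumr_ge0 => j _; apply: nrm_ge0.
    rewrite lt0r PUge0 andbT; apply/negP => /eqP PU0.
    have U0 : nrm (U k') = 0.
      move: PU0; rewrite (bigD1 k') //= => E.
      have h1 : 0 <= \sum_(j < K | j != k') nrm (U j) by apply: sumr_ge0 => j _; apply: nrm_ge0.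
      have h2 := nrm_ge0 mu A (U k'); lra.
    have ae := nrm0_ae mA (sU k') U0.
    have : cint (fun r => H k' r * U k' r) = 0.
      apply: (cint_ae0 mA).
        by apply: cmeasM; [exact: (sq_int_cmeas (HH k')) | exact: (sq_int_cmeas (sU k'))].
      by apply: filterS ae => r Hr Ar; rewrite (Hr Ar) mulr0.
    by rewrite hU => C; move: Sk'; rewrite C sqn0 ltxx.
  set PU := \sum_(j < K) nrm (U j).
  set c := Num.sqrt (Pmax / PU).
  have c2 : c ^+ 2 = Pmax / PU by rewrite sqr_sqrtr // divr_ge0 // ltW.
  have c2gt1 : 1 < c ^+ 2 by rewrite c2 ltr_pdivlMr // mul1r /PU sumU; lra.
  have sW : forall j, sq_int (fun r => cR c * U j r) by move=> j; apply: (sq_intMc mA).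
  have leW : sum_rate (fun j r => cR c * U j r) <= sum_rate V.
    apply: opt; split => //.
    rewrite (power_real sW); congr EFin.
    transitivity (\sum_(j < K) c ^+ 2 * nrm (U j)).
      by apply: eq_bigr => j _; apply: (nrm_scale mA).
    by rewrite -mulr_sumr -/PU c2 divfK // gt_eqF.
  have gtW : sum_rate V < sum_rate (fun j r => cR c * U j r).
    rewrite (@sum_rate_ext _ _ _ _ _ _ _ Ak sigma2 V U); last by move=> i j; rewrite hU.
    rewrite /Defs.sum_rate (bigD1 k') //= [X in _ < X](bigD1 k') //=.
    apply: ltr_leD.
      apply: log2_lt; first exact: (sinr_ge0 _ _ _ hAk hs).
      rewrite (sinr_scale mA Ak sigma2 HH c sU) /Defs.sinr.
      apply: frac_lt => //; last exact: (intf_ge0 _ _ _ hAk).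
      by apply: mulr_gt0 => //; rewrite hU.
    apply: ler_sum => j _; apply: log2_le; first exact: (sinr_ge0 _ _ _ hAk hs).
    rewrite (sinr_scale mA Ak sigma2 HH c sU) /Defs.sinr.
    apply: frac_le => //; last exact: ltW.
    - by apply: mulr_ge0; [exact: ltW | exact: sqn_ge0].
    - exact: (intf_ge0 _ _ _ hAk).
  by have := lt_le_trans gtW leW; rewrite ltxx.
have S0 : forall j, sqn (cint (fun r => H j r * V j r)) = 0.
  move=> j; apply/eqP; rewrite eq_le sqn_ge0 andbT leNgt; apply/negP => Hj.
  by apply: noS; exists j.
have rate0 : sum_rate V = 0.
  rewrite /Defs.sum_rate big1 // => j _.
  by rewrite /Defs.sinr S0 mulr0 mul0r log2_1.
have nHk := HHpos k.
set t := Num.sqrt (Pmax / nrm (H k)).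
have t2 : t ^+ 2 = Pmax / nrm (H k) by rewrite sqr_sqrtr // divr_ge0 // ltW.
have t2pos : 0 < t ^+ 2 by rewrite t2 divr_gt0.
pose W := fun j => if j == k then (fun r => cR t * (H k r)^*) else (fun _ => 0).
have sW : forall j, sq_int (W j).
  move=> j; rewrite /W; case: eqP => _; last exact: sq_int0.
  by apply: (sq_intMc mA); apply: (sq_int_conj mA).
have nrm0 : nrm (fun _ => 0) = 0.
  rewrite /nrm (@Rint_ext _ _ _ mu A _ (fun _ => 0)); first by rewrite Rintegral_cst // mul0r.
  by move=> x _; exact: sqn0.
have leW : sum_rate W <= sum_rate V.
  apply: opt; split => //.
  rewrite (power_real sW); congr EFin.
  rewrite (bigD1 k) //= big1 => [|j /negbTE jk]; last by rewrite /W jk nrm0.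
  rewrite addr0 /W eqxx (nrm_scale mA); last exact: (sq_int_conj mA).
  have -> : nrm (fun r => (H k r)^*) = nrm (H k).
    by rewrite /nrm; apply: Rint_ext => x _; rewrite sqn_conj.
  by rewrite t2 divfK // gt_eqF.
have sk : 0 < sinr W k.
  rewrite /Defs.sinr; apply: divr_gt0.
    apply: mulr_gt0 => //.
    have -> : cint (fun r => H k r * W k r) = cR t * cR (nrm (H k)).
      rewrite -(cint_nrm mu mA) -cint_scale //; last first.
        by apply: (prod_cintegrable mA) => //; apply: (sq_int_conj mA).
      by apply: cint_ext => r _; rewrite /W eqxx mulrCA.
    rewrite sqn_cR /sqn /= expr0n /= addr0; apply: mulr_gt0 => //.
    by rewrite exprn_gt0.
  have := intf_ge0 mu A H hAk W k; have := hs k; lra.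
have gtW : 0 < sum_rate W.
  rewrite /Defs.sum_rate (bigD1 k) //=.
  have h1 : 0 < log2 (1 + sinr W k).
    by rewrite -log2_1; apply: log2_lt.
  have h2 : 0 <= \sum_(j < K | j != k) log2 (1 + sinr W j).
    apply: sumr_ge0 => j _; rewrite -log2_1; apply: log2_le => //.
    exact: (sinr_ge0 _ _ _ hAk hs).
  lra.
by have := lt_le_trans gtW leW; rewrite rate0 ltxx.
Qed.

End Main2.

Section ChanMeas.
Variable R : realType.
Variable A : set (vec3 R).
Hypothesis mA : measurable A.

Lemma mpx : measurable_fun setT (@px R).
Proof. by apply: measurableT_comp => //; exact: measurable_fst. Qed.
Lemma mpy : measurable_fun setT (@py R).
Proof. by rewrite /py; apply: (measurableT_comp measurable_snd); exact: measurable_fst. Qed.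
Lemma mpz : measurable_fun setT (@pz R).
Proof. exact: measurable_snd. Qed.

Lemma meas_sqrt (u : vec3 R -> R) : measurable_fun A u -> measurable_fun A (fun r => Num.sqrt (u r)).
Proof.
move=> mu0; exact: (measurableT_comp (continuous_measurable_fun (@sqrt_continuous R)) mu0).
Qed.

Lemma meas_cos (u : vec3 R -> R) : measurable_fun A u -> measurable_fun A (fun r => cos (u r)).
Proof.
move=> mu0; exact: (measurableT_comp (continuous_measurable_fun (@continuous_cos R)) mu0).
Qed.

Lemma meas_sin (u : vec3 R -> R) : measurable_fun A u -> measurable_fun A (fun r => sin (u r)).
Proof.
move=> mu0; exact: (measurableT_comp (continuous_measurable_fun (@continuous_sin R)) mu0).
Qed.

Lemma meas_inv (u : vec3 R -> R) (c : R) : 0 < c -> measurable_fun A u ->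
  (forall r, A r -> c <= u r) -> measurable_fun A (fun r => (u r)^-1).
Proof.
move=> c0 mu0 hc.
have mg : measurable_fun setT (fun x : R => (Num.max x c)^-1).
  apply: nonincreasing_measurable => // x y xy.
  have hx : 0 < Num.max x c by rewrite lt_max c0 orbT.
  have hy : 0 < Num.max y c by rewrite lt_max c0 orbT.
  rewrite lef_pV2 ?posrE //.
  by rewrite ge_max !le_max xy lexx !orbT.
apply: (eq_measurable_fun (fun r => (Num.max (u r) c)^-1)).
  by move=> r /set_mem Ar; rewrite max_l // hc.
exact: (measurableT_comp mg).
Qed.




Lemma cR_inv (x : R) : (cR x)^-1 = cR x^-1.
Proof.
have -> : (cR x)^-1 = Complex (x / (x ^+ 2 + 0 ^+ 2)) (- (0 / (x ^+ 2 + 0 ^+ 2))) by [].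
rewrite /cR; congr Complex; last by rewrite mul0r oppr0.
rewrite expr0n /= addr0.
have [->|x0] := eqVneq x 0; first by rewrite mul0r invr0.
by rewrite expr2 invfM mulrA divff // mul1r.
Qed.

Lemma cmeas_cR (u : vec3 R -> R) : measurable_fun A u -> cmeas A (fun r => cR (u r)).
Proof. by move=> mu0; split => //; exact: measurable_cst. Qed.

Lemma cmeasB (f g : vec3 R -> R[i]) : cmeas A f -> cmeas A g -> cmeas A (fun x => f x - g x).
Proof.
move=> [f1 f2] [g1 g2]; split.
- have -> : (fun x => cRe (f x - g x)) = (fun x => cRe (f x) - cRe (g x)).
    by apply/funext => x; rewrite ReB.
  exact: measurable_funB.
- have -> : (fun x => cIm (f x - g x)) = (fun x => cIm (f x) - cIm (g x)).
    by apply/funext => x; rewrite ImB.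
  exact: measurable_funB.
Qed.

Variables (lambda : R) (er s : vec3 R) (d0 : R).
Hypotheses (hlambda : 0 < lambda) (her : norm3 er = 1)
  (hfront : forall r, A r -> 0 < dot3 er (sub3 s r)) (hd0 : 0 < d0)
  (hdist : forall r, A r -> d0 <= norm3 (sub3 r s)).

Local Notation dd r := (norm3 (sub3 r s)).
Local Notation ee r := (dot3 er (sub3 s r)).
Local Notation kk := (k0 lambda).

Lemma kk_gt0 : 0 < kk.
Proof. by rewrite /k0 divr_gt0 // mulr_gt0 // pi_gt0. Qed.

Lemma eta_gt0 : 0 < eta0 R.
Proof. by rewrite /eta0 mulr_gt0 // pi_gt0. Qed.

Lemma chanE r : chan lambda er s r =
  cR (Num.sqrt (ee r * (dd r)^-1)) *
  (jI R * cR (kk * eta0 R) * Complex (cos (kk * dd r)) (- sin (kk * dd r)) * cR ((4 * pi * dd r)^-1)) *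
  (1 + jI R * cR ((kk * dd r)^-1) - cR ((kk ^+ 2 * dd r ^+ 2)^-1)).
Proof. by rewrite /chan !cR_inv mul1r. Qed.

Ltac mtac := repeat first [ apply: measurable_funN | apply: measurable_funD | apply: measurable_funB | apply: measurable_funM
  | exact: measurable_cst | exact: (measurable_funTS mpx) | exact: (measurable_funTS mpy)
  | exact: (measurable_funTS mpz)].

Lemma meas_dd : measurable_fun A (fun r => dd r).
Proof. apply: meas_sqrt; rewrite /dot3 /=; mtac. Qed.

Lemma meas_ee : measurable_fun A (fun r => ee r).
Proof. rewrite /dot3 /=; mtac. Qed.

Lemma chan_cmeas : cmeas A (chan lambda er s).
Proof.
have -> : chan lambda er s = (fun r =>
  cR (Num.sqrt (ee r * (dd r)^-1)) *
  (jI R * cR (kk * eta0 R) * Complex (cos (kk * dd r)) (- sin (kk * dd r)) * cR ((4 * pi * dd r)^-1)) *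
  (1 + jI R * cR ((kk * dd r)^-1) - cR ((kk ^+ 2 * dd r ^+ 2)^-1))).
  by apply/funext => r; exact: chanE.
have md := meas_dd.
have hk := kk_gt0.
have mdinv : forall c, 0 < c -> measurable_fun A (fun r => (c * dd r)^-1).
  move=> c c0; apply: (meas_inv (c := c * d0)) => //; first exact: mulr_gt0.
    by apply: measurable_funM => //; exact: measurable_cst.
  by move=> r Ar; rewrite ler_pM2l // hdist.
apply: cmeasM; first apply: cmeasM.
- apply: cmeas_cR; apply: meas_sqrt; apply: measurable_funM; first exact: meas_ee.
  apply: (meas_inv (c := d0)) => //.
- apply: cmeasM; last by apply: cmeas_cR; apply: mdinv; rewrite mulr_gt0 // ?pi_gt0.
  apply: cmeasM; first exact: cmeas_cst.
  split.
  + by apply: meas_cos; apply: measurable_funM => //; exact: measurable_cst.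
  + by apply: measurable_funN; apply: meas_sin; apply: measurable_funM => //; exact: measurable_cst.
- apply: cmeasB; last first.
    apply: cmeas_cR; apply: (meas_inv (c := kk ^+ 2 * d0 ^+ 2)).
    + by rewrite mulr_gt0 // exprn_gt0.
    + by apply: measurable_funM; [exact: measurable_cst | exact: measurable_funX].
    + move=> r Ar; rewrite ler_pM2l ?exprn_gt0 //.
      by rewrite lerXn2r ?nnegrE ?hdist // ?(ltW hd0) // (le_trans (ltW hd0) (hdist Ar)).
  apply: cmeasD; first exact: cmeas_cst.
  apply: cmeasM; first exact: cmeas_cst.
  by apply: cmeas_cR; apply: mdinv.
Qed.

Lemma sqnR (y : R) : sqn (cR y) = y ^+ 2.
Proof. by rewrite /sqn /= expr0n /= addr0. Qed.

Lemma sqn_f3 (x y : R) : sqn (1 + jI R * cR x - cR y) = (1 - y) ^+ 2 + x ^+ 2.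
Proof.
rewrite /sqn ReB ImB ReD ImD.
rewrite ReM ImM.
have -> : cRe (1 : R[i]) = 1 by [].
have -> : cIm (1 : R[i]) = 0 by [].
rewrite /jI /cR /=; ring.
Qed.

Lemma lagrange (u w : vec3 R) : dot3 u w ^+ 2 <= dot3 u u * dot3 w w.
Proof.
case: u => [[a b] c]; case: w => [[p q] t]; rewrite /dot3 /px /py /pz /=.
have L : (a * p + b * q + c * t) ^+ 2 +
   ((a * q - b * p) ^+ 2 + (a * t - c * p) ^+ 2 + (b * t - c * q) ^+ 2) =
   (a * a + b * b + c * c) * (p * p + q * q + t * t) by ring.
by rewrite -L lerDl !addr_ge0 // sqr_ge0.
Qed.

Lemma dot3_sym (u w : vec3 R) : dot3 (sub3 u w) (sub3 u w) = dot3 (sub3 w u) (sub3 w u).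
Proof. by case: u => [[a b] c]; case: w => [[p q] t]; rewrite /dot3 /sub3 /px /py /pz /=; ring. Qed.

Lemma CS r : ee r <= dd r.
Proof.
have Ner : dot3 er er = 1.
  have h0 : 0 <= dot3 er er by rewrite /dot3; nra.
  have := sqr_sqrtr h0; rewrite -[Num.sqrt _]/(norm3 er) her expr1n => ->//.
have hd : 0 <= dd r by apply: sqrtr_ge0.
have D0 : 0 <= dot3 (sub3 r s) (sub3 r s) by rewrite /dot3; nra.
have d2 : dd r ^+ 2 = dot3 (sub3 r s) (sub3 r s) by apply: sqr_sqrtr.
have : ee r ^+ 2 <= dd r ^+ 2.
  by rewrite d2 dot3_sym -[X in _ <= X]mul1r -Ner; apply: lagrange.
move=> h; nra.
Qed.


Lemma chan_bound : exists C : R, forall r, A r ->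
  0 < sqn (chan lambda er s r) /\ sqn (chan lambda er s r) <= C.
Proof.
have hk := kk_gt0.
have he := eta_gt0.
have hpi : 0 < pi :> R by exact: pi_gt0.
set X := (kk * d0)^-1.
exists (1 * ((kk * eta0 R) ^+ 2 * ((4 * pi * d0)^-1) ^+ 2) * ((1 + X ^+ 2) ^+ 2 + X ^+ 2)).
move=> r Ar.
have hd := hdist Ar.
have dpos : 0 < dd r by apply: lt_le_trans hd.
have epos := hfront Ar.
have ed := CS r.
set x := (kk * dd r)^-1.

have kd0 : 0 < kk * d0 := mulr_gt0 hk hd0.
have kd : 0 < kk * dd r := mulr_gt0 hk dpos.
have xpos : 0 < x by rewrite /x invr_gt0.
have xX : x <= X by rewrite /x /X lef_pV2 ?posrE // ler_pM2l.
have y2 : (kk ^+ 2 * dd r ^+ 2)^-1 = x ^+ 2 by rewrite /x -exprMn exprVn.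
have p4 : 0 < 4 * pi :> R by rewrite mulr_gt0.
have p4d : 0 < 4 * pi * dd r := mulr_gt0 p4 dpos.
have p4d0 : 0 < 4 * pi * d0 := mulr_gt0 p4 hd0.
have i4 : 0 < (4 * pi * dd r)^-1 by rewrite invr_gt0.
have i4le : (4 * pi * dd r)^-1 <= (4 * pi * d0)^-1.
  by rewrite lef_pV2 ?posrE // ler_pM2l.
have ed0 : 0 <= ee r * (dd r)^-1 by rewrite mulr_ge0 // ?invr_ge0 ltW.
have SjI : sqn (jI R) = 1 by rewrite /sqn /= expr0n expr1n add0r.
have Scs : sqn (Complex (cos (kk * dd r)) (- sin (kk * dd r))) = 1.
  by rewrite /sqn /= sqrrN cos2Dsin2.
have E : sqn (chan lambda er s r) = (ee r * (dd r)^-1) *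
   ((kk * eta0 R) ^+ 2 * (4 * pi * dd r)^-1 ^+ 2) * ((1 - x ^+ 2) ^+ 2 + x ^+ 2).
  rewrite (chanE r) !sqnM !sqnR sqn_f3 y2 sqr_sqrtr // SjI Scs -/x; ring.
have f1pos : 0 < ee r * (dd r)^-1 by rewrite mulr_gt0 // invr_gt0.
have f1le : ee r * (dd r)^-1 <= 1 by rewrite ler_pdivrMr // mul1r.
have f2pos : 0 < (kk * eta0 R) ^+ 2 * (4 * pi * dd r)^-1 ^+ 2.
  by apply: mulr_gt0; apply: exprn_gt0 => //; apply: mulr_gt0.
have f3pos : 0 < (1 - x ^+ 2) ^+ 2 + x ^+ 2.
  by rewrite ltr_pwDr ?sqr_ge0 // exprn_gt0.
rewrite E; split; first by apply: mulr_gt0 => //; apply: mulr_gt0.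
have f1f2 : 0 <= ee r * (dd r)^-1 * ((kk * eta0 R) ^+ 2 * (4 * pi * dd r)^-1 ^+ 2).
  by apply: mulr_ge0; apply: ltW.
apply: (ler_pM f1f2 (ltW f3pos)).
  apply: (ler_pM (ltW f1pos) (ltW f2pos) f1le).
  apply: ler_wpM2l; first exact: sqr_ge0.
  have h0 := ltW i4; nra.
have hx2 : x ^+ 2 <= X ^+ 2 by have h0 := ltW xpos; nra.
have hx0 : 0 <= x ^+ 2 by apply: sqr_ge0.
nra.
Qed.

End ChanMeas.

Section ChanInt.
Variable R : realType.
Variable mu : {measure set (vec3 R) -> \bar R}.
Variable A : set (vec3 R).
Hypotheses (mA : measurable A) (hmuA0 : (0 < mu A)%E) (hmuAfin : (mu A < +oo)%E).
Variables (lambda : R) (er s : vec3 R) (d0 : R).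
Hypotheses (hlambda : 0 < lambda) (her : norm3 er = 1)
  (hfront : forall r, A r -> 0 < dot3 er (sub3 s r)) (hd0 : 0 < d0)
  (hdist : forall r, A r -> d0 <= norm3 (sub3 r s)).

Lemma sq_int_one : sq_int mu A (fun _ => (1 : R[i])).
Proof.
split; first exact: measurable_cst.
split; first exact: measurable_cst.
have -> : sqn (1 : R[i]) = 1 by rewrite /sqn /= expr1n expr0n /= addr0.
by rewrite integral_cst // mul1e.
Qed.

Lemma chan_sq_int : sq_int mu A (chan lambda er s).
Proof.
have [C HC] := chan_bound hlambda her hfront hd0 hdist.
apply: (@sq_int_dom _ _ _ mu A mA _ (fun _ => 1) C).
- exact: (chan_cmeas er hlambda hd0 hdist).
- exact: sq_int_one.
- move=> r Ar; have -> : sqn (1 : R[i]) = 1 by rewrite /sqn /= expr1n expr0n /= addr0.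
  by rewrite mulr1; case: (HC r Ar).
Qed.

Lemma chan_nrm_pos : 0 < nrm mu A (chan lambda er s).
Proof.
have [C HC] := chan_bound hlambda her hfront hd0 hdist.
rewrite lt0r nrm_ge0 andbT; apply/negP => /eqP n0.
have [N [mN N0 sub]] := nrm0_ae mA chan_sq_int n0.
have AN : A `<=` N.
  move=> r Ar; apply: sub => /= /(_ Ar) /eqP.
  rewrite -sqn_eq0 => /eqP h0.
  by case: (HC r Ar); rewrite h0 ltxx.
have h : (mu A <= mu N)%E by apply: le_measure => //; rewrite inE.
by move: h; rewrite N0 => h; have := lt_le_trans hmuA0 h; rewrite ltxx.
Qed.

End ChanInt.

Local Close Scope classical_set_scope.
Unset Implicit Arguments.

Theorem proposition1 (R : realType) (K : nat)
  (mu : {measure set (vec3 R) -> \bar R}) (A : set (vec3 R))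
  (lambda : R) (er : vec3 R) (s : 'I_K -> vec3 R)
  (Ak sigma2 : 'I_K -> R) (Pmax : R)
  (hA : measurable A) (hmuA0 : (0 < mu A)%E) (hmuAfin : (mu A < +oo)%E)
  (hlambda : 0 < lambda) (her : norm3 er = 1)
  (hAk : forall k, 0 < Ak k) (hsigma : forall k, 0 < sigma2 k) (hP : 0 < Pmax)
  (hfront : forall k r, A r -> 0 < dot3 er (sub3 (s k) r))
  (hdist : exists d0 : R, 0 < d0 /\ forall k r, A r -> d0 <= norm3 (sub3 r (s k)))
  (V : 'I_K -> vec3 R -> R[i]) :
  optimal mu A (fun k => chan lambda er (s k)) Ak sigma2 Pmax V ->
  forall k : 'I_K, exists b : 'I_K -> R[i],
    {ae mu, forall r, A r ->
       V k r = \sum_(j < K) b j * (chan lambda er (s j) r)^*}.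
Proof.
move=> opt k.
have [d0 [hd0 hd]] := hdist.
have HH : forall j, sq_int mu A (chan lambda er (s j)).
  by move=> j; apply: (chan_sq_int hA hmuAfin hlambda her (hfront j) hd0 (hd j)).
have HHpos : forall j, 0 < nrm mu A (chan lambda er (s j)).
  by move=> j; apply: (chan_nrm_pos hA hmuA0 hmuAfin hlambda her (hfront j) hd0 (hd j)).
exact: (@main_abstract _ _ _ mu A hA K (fun j => chan lambda er (s j)) Ak sigma2 Pmax hAk hsigma hP HH HHpos V opt k).
Qed.
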